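(* Let $M,K,N\in\mathbb{N}$ with $K\le M+1$, let $w_1,w_2\in\mathbb{N}$ with $\frac{2\pi}{w_2}\le\frac{2\pi}{w_1}$, let $f_1:\mathbb{R}\to\mathbb{R}$ be continuous and periodic with cycle length $\frac{2\pi}{w_1}$, let $\tau=\frac{2\pi}{w_2(M+1)}$, and let $T\subset[0,\frac{2\pi}{w_1}]$ be a set of $N$ times such that $X=\{(f_1(t),f_1(t+\tau),\dots,f_1(t+M\tau))^T:t\in T\}$ consists of $N$ points. Regard $X$ as an $N\times(M+1)$ matrix whose rows are these points, let $\lambda_1\ge\lambda_2\ge\dots\ge\lambda_N\ge0$ be the eigenvalues of $XX^T$ (with $\lambda_i=0$ for $i>M+1$), and let $\phi(X)\subset\mathbb{R}^K$ be the point cloud obtained by orthogonally projecting each point of $X$ onto its top $K$ principal components, i.e. the rows of $XV_K$ where $V_K$ consists of top $K$ right singular vectors of $X$. Let $\mathrm{score}(f_1|f_2)=\mathrm{mp}(\mathrm{dgm}_1(X))/\sqrt3$ and $\mathrm{score}_\phi(f_1|f_2)=\mathrm{mp}(\mathrm{dgm}_1(\phi(X)))/\sqrt3$. Then \[|\mathrm{score}(f_1|f_2)-\mathrm{score}_\phi(f_1|f_2)|\le\sqrt{\tfrac83}\,\Big(\sum_{i=K+1}^N\lambda_i^2\Big)^{1/4}.\]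
   Context: $\mathrm{dgm}_1(Y)$ denotes the 1-dimensional persistence diagram of the Vietoris–Rips filtration of a finite Euclidean point cloud $Y$, and $\mathrm{mp}(\cdot)$ the largest persistence (death minus birth) among its points. In the paper $\frac{2\pi}{w_2}$ is the cycle length of a more periodic time series $f_2$, $X$ is the conditional sliding windows embedding of $f_1$ given $f_2$, and the quotients are the conditional periodicity score and its PCA version. *)

(* Defs.v *)
From HB Require Import structures.
From mathcomp Require Import all_boot all_order all_algebra.
From mathcomp Require Import all_classical all_reals all_analysis.
Set Implicit Arguments. Unset Strict Implicit. Unset Printing Implicit Defensive.
Import Order.TTheory GRing.Theory Num.Theory.
Local Open Scope ring_scope.

Definition vr_edge (R : realType) (N : nat) (d : 'I_N -> 'I_N -> R) (s : R)
  (e : 'I_N * 'I_N) : bool :=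
  ((e.1 < e.2)%N && (d e.1 e.2 <= s)).

Definition vr_tri (R : realType) (N : nat) (d : 'I_N -> 'I_N -> R) (s : R)
  (x : 'I_N * 'I_N * 'I_N) : bool :=
  let: (i, j, k) := x in
  [&& (i < j)%N, (j < k)%N, d i j <= s, d i k <= s & d j k <= s].

Definition boundary1 (F : fieldType) (N : nat) (c : 'I_N * 'I_N -> F)
  (v : 'I_N) : F :=
  \sum_(e : 'I_N * 'I_N) c e * ((v == e.2)%:R - (v == e.1)%:R).

Definition tri_coeff (F : fieldType) (N : nat) (x : 'I_N * 'I_N * 'I_N)
  (e : 'I_N * 'I_N) : F :=
  let: (i, j, k) := x in
  (e == (j, k))%:R - (e == (i, k))%:R + (e == (i, j))%:R.

Definition boundary2 (F : fieldType) (N : nat) (a : 'I_N * 'I_N * 'I_N -> F)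
  (e : 'I_N * 'I_N) : F :=
  \sum_(x : 'I_N * 'I_N * 'I_N) a x * tri_coeff F x e.

(** The map H_1(VR_s; F) -> H_1(VR_t; F) induced by inclusion (s <= t) is
    nonzero iff some 1-cycle of VR_s is not a boundary in VR_t. *)
Definition H1_map_nonzero (F : fieldType) (R : realType) (N : nat)
  (d : 'I_N -> 'I_N -> R) (s t : R) : Prop :=
  exists c : 'I_N * 'I_N -> F,
    (forall e, ~~ vr_edge d s e -> c e = 0) /\
    (forall v, boundary1 c v = 0) /\
    ~ (exists a : 'I_N * 'I_N * 'I_N -> F,
         (forall x, ~~ vr_tri d t x -> a x = 0) /\
         (forall e, c e = boundary2 a e)).

(** mp(dgm_1): the largest persistence (death - birth) of a point of the
    1-dimensional VR persistence diagram (coefficients in F_2), computed from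
    the rank invariant: a bar [b,d) makes H_1(VR_s) -> H_1(VR_t) nonzero
    exactly for b <= s <= t < d, so the maximal bar length is the supremum of
    t - s over such pairs (0 for an empty diagram; sup set0 = 0). *)
Definition mp_dgm1 (R : realType) (N : nat) (d : 'I_N -> 'I_N -> R) : R :=
  sup [set u : R | exists s t : R,
        [/\ s <= t, H1_map_nonzero [the fieldType of 'F_2] d s t & u = t - s]].

Definition rowdist (R : realType) (N n : nat) (A : 'M[R]_(N, n)) (i j : 'I_N) : R :=
  Num.sqrt (\sum_(k < n) (A i k - A j k) ^+ 2).

Definition score (R : realType) (N n : nat) (A : 'M[R]_(N, n)) : R :=
  mp_dgm1 (rowdist A) / Num.sqrt 3.

Definition lam_ext (R : realType) (N : nat) (lam : 'I_N -> R) (k : nat) : R :=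
  match @insub nat (fun k => (k < N)%N) 'I_N k with
  | Some i => lam i
  | None => 0
  end.

(* Main.v *)
Require Import Defs.
From HB Require Import structures.
From mathcomp Require Import all_boot all_order all_algebra.
From mathcomp Require Import all_classical all_reals all_analysis.
From mathcomp Require Import lra ring.
Import Order.TTheory GRing.Theory Num.Theory numFieldNormedType.Exports.
Set Implicit Arguments. Unset Strict Implicit.
Local Open Scope ring_scope.

Lemma H1_transfer (F : fieldType) (R : realType) (N : nat)
  (dX dY : 'I_N -> 'I_N -> R) (e s t : R) :
  (forall i j, `|dX i j - dY i j| <= e) ->
  H1_map_nonzero F dX s t -> H1_map_nonzero F dY (s + e) (t - e).
Proof.
move=> He [c [Hc [Hcyc Hnb]]]; exists c; split; [|split; [exact: Hcyc|]].
- move=> x Hn; apply: (Hc x); apply: contra Hn.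
  rewrite /vr_edge => /andP[-> Hd] /=.
  have := He x.1 x.2; rewrite ler_norml => /andP[H1 H2]; lra.
- move=> [a [Ha Hab]]; apply: Hnb; exists a; split => // x Hx; apply: Ha.
  apply: contra Hx; case: x => [[i j] k] /=.
  case/and5P => -> -> H1 H2 H3 /=.
  have := He i j; have := He i k; have := He j k.
  rewrite !ler_norml => /andP[? ?] /andP[? ?] /andP[? ?].
  apply/and3P; split; lra.
Qed.

Lemma sum_delta (F : fieldType) (I : finType) (g : I -> F) (q : I) :
  \sum_k g k * (q == k)%:R = g q.
Proof.
rewrite (bigD1 q) //= eqxx mulr1 big1 ?addr0 // => k /negbTE.
by rewrite eq_sym => ->; rewrite mulr0.
Qed.

Lemma natr_andb (F : fieldType) (a b : bool) :
  ((a && b)%:R : F) = a%:R * b%:R.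
Proof. by case: a; case: b; rewrite ?mul1r ?mul0r. Qed.

Lemma cone_boundary (F : fieldType) (n : nat) (c : 'I_n.+1 * 'I_n.+1 -> F) :
  (forall e : 'I_n.+1 * 'I_n.+1, ~~ (e.1 < e.2)%N -> c e = 0) -> (forall v, boundary1 c v = 0) ->
  exists a : 'I_n.+1 * 'I_n.+1 * 'I_n.+1 -> F,
    (forall i j k : 'I_n.+1, ~~ ((i < j) && (j < k))%N -> a (i, j, k) = 0) /\
    forall e, c e = boundary2 a e.
Proof.
move=> Hsupp Hcyc.
pose G (j k : 'I_n.+1) := if (0 < j)%N then c (j, k) else 0.
exists (fun x => let: (i, j, k) := x in if i == ord0 then G j k else 0).
split.
  move=> i j k /=; case: eqP => // ->; rewrite /G; case: ifP => // j0.
  move=> H; apply: (Hsupp (_, _)) => /=. apply: contra H => ->; by rewrite andbT.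
move=> [p q]; rewrite /boundary2.
have -> : \sum_(x : 'I_n.+1 * 'I_n.+1 * 'I_n.+1) (let: (i, j, k) := x in
     if i == ord0 then G j k else 0) * tri_coeff F x (p, q) =
   \sum_i \sum_j \sum_k (if i == ord0 then G j k else 0)
     * tri_coeff F (i, j, k) (p, q).
  by rewrite pair_bigA pair_bigA; apply: eq_bigr => -[[i j] k].
rewrite (bigD1 ord0) //= [X in _ + X]big1 ?addr0; last first.
  move=> i Hi; rewrite (negbTE Hi); apply: big1 => j _; apply: big1 => k _; by rewrite mul0r.
rewrite ?eqxx.
have -> : \sum_j \sum_k G j k * tri_coeff F (ord0, j, k) (p, q) =
   G p q - (p == ord0)%:R * \sum_j G j q + (p == ord0)%:R * \sum_k G q k.
  rewrite /tri_coeff.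
  under eq_bigr => j _ do under eq_bigr => k _ do
    rewrite !xpair_eqE !mulrDr mulrN.
  under eq_bigr => j _ do rewrite !big_split /= sumrN.
  rewrite !big_split /= sumrN.
  congr (_ - _ + _).
  - under eq_bigr => j _ do under eq_bigr => k _ do rewrite natr_andb mulrA.
    under eq_bigr => j _ do rewrite (@sum_delta _ _ (fun k => G j k * (p == j)%:R)).
    by rewrite (@sum_delta _ _ (fun j => G j q)).
  - case: (p == ord0) => /=; last first.
      by rewrite mul0r big1 // => j _; rewrite big1 // => k _; rewrite mulr0.
    by rewrite mul1r; apply: eq_bigr => j _; exact: (@sum_delta _ _ (G j) q).
  - case: (p == ord0) => /=; last first.
      by rewrite mul0r big1 // => j _; rewrite big1 // => k _; rewrite mulr0.
    rewrite mul1r (eq_bigr (fun j => (\sum_k G j k) * (q == j)%:R)).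
      exact: (@sum_delta _ _ (fun j => \sum_k G j k) q).
    by move=> j _; rewrite mulr_suml.
have ordpos (j : 'I_n.+1) : j != ord0 -> (0 < j)%N.
  move=> Hj; rewrite lt0n; apply: contra Hj => /eqP H; apply/eqP; exact: val_inj.
case: eqP => [-> | Hp]; last first.
  rewrite !mul0r subr0 addr0 /G ifT //; apply: ordpos; by apply/eqP.
rewrite !mul1r {1}/G ltnn sub0r.
have Hc := Hcyc q; rewrite /boundary1 in Hc.
have H1 : \sum_j c (j, q) = \sum_e c e * (q == e.2)%:R.
  rewrite (eq_bigr (fun j => \sum_k c (j,k) * (q==k)%:R)).
    by rewrite pair_bigA; apply: eq_bigr => -[j k].
  by move=> j _; rewrite (@sum_delta _ _ (fun k => c (j, k))).
have H2 : \sum_k c (q, k) = \sum_e c e * (q == e.1)%:R.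
  rewrite -(@sum_delta _ _ (fun j => \sum_k c (j, k)) q).
  under eq_bigr => j _ do rewrite mulr_suml.
  by rewrite pair_bigA; apply: eq_bigr => -[j k].
rewrite (eq_bigr (fun e => c e * (q == e.2)%:R - c e * (q == e.1)%:R)) in Hc;
  last by move=> e _; rewrite mulrBr.
rewrite sumrB -H1 -H2 in Hc.
have H3 : \sum_j c (j, q) = c (ord0, q) + \sum_j G j q.
  rewrite [LHS](bigD1 ord0) // [X in _ + X](bigD1 ord0) //=.
  rewrite [G ord0 q]/G /= add0r.
  congr (_ + _); apply: eq_bigr => j Hj; rewrite /G ifT //; exact: ordpos.
case: (eqVneq q ord0) => [Hq | Hq].
  rewrite Hq.
  have Hz : \sum_j G j ord0 = 0.
    apply: big1 => j _; rewrite /G; case: ifP => // _; apply: (Hsupp (_, _)) => /=.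
    by [].
  have Hz2 : \sum_k G ord0 k = 0 by apply: big1 => k _.
  by rewrite Hz Hz2 Hsupp //= oppr0 addr0.
have -> : \sum_k G q k = \sum_k c (q, k).
  by apply: eq_bigr => k _; rewrite /G ifT //; exact: ordpos.
have : \sum_k c (q, k) = \sum_j c (j, q).
  by apply/eqP; rewrite eq_sym -subr_eq0 Hc.
move=> ->; rewrite H3; ring.
Qed.

Lemma H1_zero_big (F : fieldType) (R : realType) (N : nat)
  (d : 'I_N -> 'I_N -> R) (s t : R) :
  (forall i j, d i j <= t) -> ~ H1_map_nonzero F d s t.
Proof.
move=> Hd [c [Hc [Hcyc Hnb]]]; apply: Hnb.
case: N d c Hd Hc Hcyc => [|n] d c Hd Hc Hcyc.
  exists (fun _ => 0); split => // -[[[] //]].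
have [a [Ha Hab]] := @cone_boundary F n c
  (fun e He => Hc e (ltac:(by rewrite /vr_edge negb_and He))) Hcyc.
exists a; split => // -[[i j] k] Hx; apply: Ha; apply: contra Hx => /andP[H1 H2].
by rewrite /vr_tri H1 H2 !Hd.
Qed.

Lemma H1_zero_neg (F : fieldType) (R : realType) (N : nat)
  (d : 'I_N -> 'I_N -> R) (s t : R) :
  (forall i j, 0 <= d i j) -> s < 0 -> ~ H1_map_nonzero F d s t.
Proof.
move=> Hd Hs [c [Hc [Hcyc Hnb]]]; apply: Hnb.
exists (fun _ => 0); split => // e.
rewrite /boundary2 big1 ?Hc // => [|x _]; last by rewrite mul0r.
rewrite /vr_edge negb_and; apply/orP; right; rewrite -ltNge.
exact: lt_le_trans Hs (Hd _ _).
Qed.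

Definition Sset (R : realType) (N : nat) (d : 'I_N -> 'I_N -> R) : set R :=
  [set u : R | exists s t : R,
        [/\ s <= t, H1_map_nonzero [the fieldType of 'F_2] d s t & u = t - s]].


Lemma mpE (R : realType) (N : nat) (d : 'I_N -> 'I_N -> R) :
  mp_dgm1 d = sup (Sset d).
Proof. by []. Qed.

Lemma Sset_ub (R : realType) (N : nat) (d : 'I_N -> 'I_N -> R) :
  (forall i j, 0 <= d i j) -> has_ubound (Sset d).
Proof.
move=> Hd; exists (\sum_(p : 'I_N * 'I_N) d p.1 p.2) => u [s [t [Hst Hnz ->]]].
have Hs : 0 <= s.
  rewrite leNgt; apply/negP => Hs; exact: (H1_zero_neg Hd Hs Hnz).
have Ht : t < \sum_(p : 'I_N * 'I_N) d p.1 p.2.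
  rewrite ltNge; apply/negP => Ht; apply: (H1_zero_big _ Hnz) => i j.
  apply: le_trans Ht; rewrite (bigD1 (i, j)) //= lerDl.
  by apply: sumr_ge0 => p _.
by apply: ltW; apply: le_lt_trans Ht; rewrite lerBlDr lerDl.
Qed.

Lemma mp_ge0 (R : realType) (N : nat) (d : 'I_N -> 'I_N -> R) :
  (forall i j, 0 <= d i j) -> 0 <= mp_dgm1 d.
Proof.
move=> Hd; rewrite mpE.
have [[u Su]|Hn] := pselect (exists u, Sset d u).
  apply: le_trans (ub_le_sup (Sset_ub Hd) Su).
  by case: Su => s [t [Hst _ ->]]; rewrite subr_ge0.
have -> : Sset d = set0.
  by apply/seteqP; split => x // Sx; exfalso; apply: Hn; exists x.
by rewrite sup0.
Qed.

Lemma mp_le (R : realType) (N : nat) (dX dY : 'I_N -> 'I_N -> R) (e : R) :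
  (forall i j, 0 <= dX i j) -> (forall i j, 0 <= dY i j) -> 0 <= e ->
  (forall i j, `|dX i j - dY i j| <= e) ->
  mp_dgm1 dX <= mp_dgm1 dY + 2 * e.
Proof.
move=> HX HY He Hxy.
have HmY := mp_ge0 HY.
rewrite [mp_dgm1 dX]mpE.
have [[u0 Su0]|Hn] := pselect (exists u, Sset dX u); last first.
  have -> : Sset dX = set0.
    by apply/seteqP; split => x // Sx; exfalso; apply: Hn; exists x.
  rewrite sup0; lra.
apply: ge_sup; first by exists u0.
move=> u [s [t [Hst Hnz ->]]].
have [Hsmall|Hbig] := lerP (t - s) (2 * e); first lra.
have Hnz' := H1_transfer Hxy Hnz.
have SY : Sset dY ((t - e) - (s + e)).
  by exists (s + e), (t - e); split => //; lra.
have := ub_le_sup (Sset_ub HY) SY; rewrite -mpE; lra.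
Qed.

Lemma mp_diff (R : realType) (N : nat) (dX dY : 'I_N -> 'I_N -> R) (e : R) :
  (forall i j, 0 <= dX i j) -> (forall i j, 0 <= dY i j) -> 0 <= e ->
  (forall i j, `|dX i j - dY i j| <= e) ->
  `|mp_dgm1 dX - mp_dgm1 dY| <= 2 * e.
Proof.
move=> HX HY He Hxy.
have H1 := mp_le HX HY He Hxy.
have H2 : mp_dgm1 dY <= mp_dgm1 dX + 2 * e.
  by apply: mp_le => // i j; rewrite distrC.
rewrite ler_norml; apply/andP; split; lra.
Qed.

Lemma comp_sq_inj (F : fieldType) (p q : {poly F}) :
  p \Po 'X^2 = q \Po 'X^2 -> p = q.
Proof.
move=> H; apply/eqP; rewrite -subr_eq0 -(comp_poly_eq0 _ (q := 'X^2)).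
  by rewrite comp_polyB H subrr.
by rewrite size_polyXn.
Qed.

Lemma char_poly_sq (F : fieldType) n (A : 'M[F]_n) :
  char_poly (A *m A) \Po 'X^2 = char_poly A * char_poly (- A).
Proof.
set B := map_mx (@polyC F) A.
have E : map_mx (comp_poly 'X^2) (char_poly_mx (A *m A)) =
         ('X%:M - B) *m ('X%:M + B).
  rewrite /char_poly_mx map_mxB map_scalar_mx /= comp_polyX.
  have -> : map_mx (comp_poly 'X^2) (map_mx (@polyC F) (A *m A)) = B *m B.
    rewrite -map_mxM; apply/matrixP => i j; by rewrite !mxE comp_polyC.
  rewrite mulmxBl !mulmxDr -scalar_mxM -expr2 mul_scalar_mx mul_mx_scalar.
  by rewrite opprD addrA addrK.
rewrite /char_poly -det_map_mx E det_mulmx; congr (_ * _).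
by rewrite /char_poly_mx map_mxN opprK.
Qed.

Lemma char_poly_neg (F : fieldType) n (A : 'M[F]_n) :
  char_poly (- A) = (-1) ^+ n * (char_poly A \Po (- 'X)).
Proof.
rewrite /char_poly -det_map_mx -detZ scaleN1r; congr (\det _).
rewrite /char_poly_mx map_mxB map_scalar_mx /= comp_polyX map_mxN.
have -> : map_mx (comp_poly (- 'X)) (map_mx (@polyC F) A) = map_mx (@polyC F) A.
  by apply/matrixP => i j; rewrite !mxE comp_polyC.
have -> : (- 'X)%:M = - ('X%:M) :> 'M[{poly F}]_n.
  by apply/matrixP => i j; rewrite !mxE mulNrn.
by rewrite opprB !opprK addrC.
Qed.

Lemma trace_sq (F : fieldType) n (C : 'M[F]_n) (lam : 'I_n -> F) :
  char_poly C = \prod_(i < n) ('X - (lam i)%:P) ->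
  \tr (C *m C) = \sum_i lam i ^+ 2.
Proof.
move=> HC.
set D := diag_mx (\row_i lam i).
have HD : char_poly D = \prod_(i < n) ('X - (lam i)%:P).
  rewrite char_poly_trig ?diag_mx_is_trig //; apply: eq_bigr => i _.
  by rewrite !mxE eqxx.
have E : char_poly (C *m C) = char_poly (D *m D).
  by apply: comp_sq_inj; rewrite !char_poly_sq !char_poly_neg HC HD.
have -> : \sum_i lam i ^+ 2 = \tr (D *m D).
  rewrite mulmx_diag mxtrace_diag; apply: eq_bigr => i _; by rewrite !mxE expr2.
case: n C lam HC D HD E => [|n] C lam HC D HD E; first by rewrite /mxtrace !big_ord0.
apply: oppr_inj; rewrite -!char_poly_trace //; by rewrite E.
Qed.

Lemma cauchy_schwarz (R : realFieldType) n (f g : 'I_n -> R) :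
  (\sum_k f k * g k) ^+ 2 <= (\sum_k f k ^+ 2) * (\sum_k g k ^+ 2).
Proof.
have H : 0 <= \sum_a \sum_b (f a * g b - f b * g a) ^+ 2.
  by apply: sumr_ge0 => a _; apply: sumr_ge0 => b _; apply: sqr_ge0.
have E1 : \sum_a \sum_b (f a * g b) ^+ 2 = (\sum_k f k ^+ 2) * (\sum_k g k ^+ 2).
  rewrite mulr_suml; apply: eq_bigr => a _; rewrite mulr_sumr.
  by apply: eq_bigr => b _; rewrite exprMn.
have E2 : \sum_a \sum_b (f b * g a) ^+ 2 = (\sum_k f k ^+ 2) * (\sum_k g k ^+ 2).
  by rewrite exchange_big /= E1.
have E3 : \sum_a \sum_b (f a * g b * (f b * g a)) = (\sum_k f k * g k) ^+ 2.
  rewrite expr2 mulr_suml; apply: eq_bigr => a _; rewrite mulr_sumr.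
  by apply: eq_bigr => b _; ring.
have E : \sum_a \sum_b (f a * g b - f b * g a) ^+ 2 =
   \sum_a \sum_b (f a * g b) ^+ 2 + \sum_a \sum_b (f b * g a) ^+ 2
   - 2 * \sum_a \sum_b (f a * g b * (f b * g a)).
  rewrite -big_split /= mulr_sumr -sumrB; apply: eq_bigr => a _.
  rewrite -big_split /= mulr_sumr -sumrB; apply: eq_bigr => b _.
  ring.
move: H; rewrite E E1 E2 E3; lra.
Qed.

Lemma proj_trace (R : realType) N m K (X : 'M[R]_(N, m)) (V : 'M[R]_(m, K))
  (d : 'rV[R]_K) :
  V^T *m V = 1%:M -> (X^T *m X) *m V = V *m diag_mx d ->
  \sum_a \sum_b (X *m (1%:M - V *m V^T) *m X^T) a b ^+ 2 =
  \tr ((X *m X^T) *m (X *m X^T)) - \sum_k d 0 k ^+ 2.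
Proof.
move=> HV HAV.
set P := V *m V^T; set A := X^T *m X; set Q := 1%:M - P.
set G := X *m Q *m X^T.
have HAt : A^T = A by rewrite /A trmx_mul trmxK.
have HPt : P^T = P by rewrite /P trmx_mul trmxK.
have HQt : Q^T = Q by rewrite /Q linearB /= trmx1 HPt.
have HGt : G^T = G by rewrite /G !trmx_mul trmxK HQt mulmxA.
have HVA : V^T *m A = diag_mx d *m V^T.
  by rewrite -HAt -trmx_mul HAV trmx_mul tr_diag_mx.
have HPA : P *m A = A *m P.
  by rewrite /P -mulmxA HVA mulmxA -HAV mulmxA.
have HPP : P *m P = P by rewrite /P mulmxA -(mulmxA V) HV mulmx1.
have HQA : Q *m A = A *m Q.
  by rewrite /Q mulmxBl mulmxBr mul1mx mulmx1 HPA.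
have HQQ : Q *m Q = Q.
  by rewrite /Q mulmxBl !mulmxBr !mul1mx mulmx1 HPP subrr subr0.
have E1 : \sum_a \sum_b G a b ^+ 2 = \tr (G *m G^T).
  rewrite /mxtrace; apply: eq_bigr => a _; rewrite [RHS]mxE; apply: eq_bigr => b _.
  by rewrite [G^T b a]mxE expr2.
rewrite E1 HGt.
have E2 : \tr (G *m G) = \tr (A *m A *m Q).
  have -> : G *m G = X *m (Q *m X^T *m X *m Q *m X^T) by rewrite /G !mulmxA.
  rewrite mxtrace_mulC.
  have -> : Q *m X^T *m X *m Q *m X^T *m X = Q *m A *m Q *m A
    by rewrite /A !mulmxA.
  by rewrite HQA -(mulmxA A Q Q) HQQ -(mulmxA A Q A) HQA mulmxA.
rewrite E2 /Q mulmxBr mulmx1 mxtraceD linearN /=.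
have -> : \tr (A *m A) = \tr (X *m X^T *m (X *m X^T)).
  by rewrite /A -!mulmxA mxtrace_mulC -!mulmxA.
congr (_ - _).
have HAV' : A *m V = V *m diag_mx d := HAV.
rewrite /P mulmxA -(mulmxA A A V) HAV' mulmxA HAV'.
rewrite mxtrace_mulC !mulmxA HV mul1mx mulmx_diag mxtrace_diag.
by apply: eq_bigr => k _; rewrite mxE expr2.
Qed.

Definition n2 (R : realType) p (y : 'rV[R]_p) := \sum_k y 0 k ^+ 2.

Lemma n2_mul (R : realType) p (y : 'rV[R]_p) : n2 y = (y *m y^T) 0 0.
Proof. rewrite /n2 mxE; apply: eq_bigr => k _; by rewrite mxE expr2. Qed.

Lemma n2_ge0 (R : realType) p (y : 'rV[R]_p) : 0 <= n2 y.
Proof. by apply: sumr_ge0 => k _; apply: sqr_ge0. Qed.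

Lemma rowdistE (R : realType) N p (A : 'M[R]_(N, p)) i j :
  rowdist A i j = Num.sqrt (n2 ((delta_mx 0 i - delta_mx 0 j) *m A)).
Proof.
rewrite /rowdist /n2 mulmxBl -!rowE; congr (Num.sqrt _).
by apply: eq_bigr => k _; rewrite !mxE.
Qed.

Lemma n2_diff (R : realType) N m K (X : 'M[R]_(N, m)) (V : 'M[R]_(m, K))
  (u : 'rV[R]_N) :
  n2 (u *m X) - n2 (u *m (X *m V)) =
  (u *m (X *m (1%:M - V *m V^T) *m X^T) *m u^T) 0 0.
Proof.
rewrite !n2_mul.
have -> : u *m (X *m (1%:M - V *m V^T) *m X^T) *m u^T =
  (u *m X) *m (u *m X)^T - (u *m (X *m V)) *m (u *m (X *m V))^T.
  rewrite mulmxBr mulmx1 !mulmxBl !mulmxBr !mulmxBl !trmx_mul !mulmxA.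
  by [].
by rewrite !mxE.
Qed.

Lemma quad_bound (R : realType) N (u : 'rV[R]_N) (G : 'M[R]_N) :
  ((u *m G *m u^T) 0 0) ^+ 2 <= (n2 u) ^+ 2 * \sum_a \sum_b G a b ^+ 2.
Proof.
set w := fun a => \sum_b G a b * u 0 b.
have -> : (u *m G *m u^T) 0 0 = \sum_a u 0 a * w a.
  rewrite -mulmxA mxE; apply: eq_bigr => a _; rewrite mxE; congr (_ * _).
  by apply: eq_bigr => b _; rewrite mxE.
apply: le_trans (cauchy_schwarz _ _) _.
rewrite -/(n2 u) expr2 -mulrA; apply: ler_wpM2l; first exact: n2_ge0.
rewrite mulr_sumr; apply: ler_sum => a _.
apply: le_trans (cauchy_schwarz _ _) _.
by rewrite mulrC.
Qed.

Lemma n2_delta (R : realType) N (i j : 'I_N) :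
  n2 (delta_mx 0 i - delta_mx 0 j : 'rV[R]_N) <= 2.
Proof.
have S1 (l : 'I_N) : \sum_k ((k == l)%:R : R) = 1.
  rewrite (bigD1 l) //= eqxx big1 ?addr0 // => k /negbTE -> //.
apply: (@le_trans _ _ (\sum_k (((k == i)%:R : R) + (k == j)%:R))).
  apply: ler_sum => k _; rewrite !mxE /=.
  by case: (k == i); case: (k == j); rewrite /= ?subrr ?subr0 ?sub0r; lra.
by rewrite big_split /= !S1.
Qed.

Lemma sqrt_diff (R : realType) (a b : R) : 0 <= a -> 0 <= b ->
  `|Num.sqrt a - Num.sqrt b| <= Num.sqrt `|a - b|.
Proof.
move=> Ha Hb.
rewrite -{2}(sqr_sqrtr Ha) -{2}(sqr_sqrtr Hb).
have Hsa := sqrtr_ge0 a; have Hsb := sqrtr_ge0 b.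
move: (Num.sqrt a) (Num.sqrt b) Hsa Hsb => x y Hx Hy.
rewrite -sqrtr_sqr ler_sqrt ?normr_ge0 //.
have [Hxy|Hxy] := lerP y x.
  rewrite ger0_norm; first by nra.
  by rewrite subr_ge0; nra.
rewrite ler0_norm; first by nra.
by rewrite subr_le0; nra.
Qed.

Lemma dist_bound (R : realType) N m K (X : 'M[R]_(N, m)) (V : 'M[R]_(m, K))
  (d : 'rV[R]_K) :
  V^T *m V = 1%:M -> (X^T *m X) *m V = V *m diag_mx d ->
  forall i j, `|rowdist X i j - rowdist (X *m V) i j| <=
    Num.sqrt (2 * Num.sqrt (\tr ((X *m X^T) *m (X *m X^T)) - \sum_k d 0 k ^+ 2)).
Proof.
move=> HV HAV i j.
rewrite -(proj_trace HV HAV).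
set G := X *m (1%:M - V *m V^T) *m X^T.
set T := \sum_a \sum_b G a b ^+ 2.
have HT : 0 <= T by apply: sumr_ge0 => a _; apply: sumr_ge0 => b _; apply: sqr_ge0.
set u : 'rV[R]_N := delta_mx 0 i - delta_mx 0 j.
rewrite !rowdistE -/u.
apply: le_trans (sqrt_diff (n2_ge0 _) (n2_ge0 _)) _.
rewrite ler_sqrt; last by apply: mulr_ge0 => //; apply: sqrtr_ge0.
rewrite n2_diff -/G.
set q := (u *m G *m u^T) 0 0.
have Hq := quad_bound u G; rewrite -/q -/T in Hq.
have Hu := n2_delta R i j; rewrite -/u in Hu.
have Hu0 := n2_ge0 u.
rewrite -sqrtr_sqr.
apply: (@le_trans _ _ (Num.sqrt (n2 u ^+ 2 * T))).
  by rewrite ler_sqrt // mulr_ge0 // sqr_ge0.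
rewrite sqrtrM ?sqr_ge0 // sqrtr_sqr ger0_norm //.
apply: ler_wpM2r => //; exact: sqrtr_ge0.
Qed.

Unset Implicit Arguments.

Lemma lam_extE (R : realType) N (lam : 'I_N -> R) (i : 'I_N) : lam_ext lam i = lam i.
Proof.
rewrite /lam_ext; case: insubP => [i' _ Hi'|H]; last by rewrite ltn_ord in H.
by congr (lam _); apply: val_inj.
Qed.

Lemma lam_ext0 (R : realType) N (lam : 'I_N -> R) k : (N <= k)%N -> lam_ext lam k = 0.
Proof.
move=> Hk; rewrite /lam_ext; case: insubP => [i' Hi' _|//].
by rewrite ltnNge Hk in Hi'.
Qed.

Lemma sum_split (R : realType) N K (lam : 'I_N -> R) :
  \sum_i lam i ^+ 2 - \sum_(k < K) lam_ext lam k ^+ 2 =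
  \sum_(i < N | (K <= i)%N) lam i ^+ 2.
Proof.
rewrite (bigID (fun i : 'I_N => (i < K)%N)) /=.
have -> : \sum_(i < N | ~~ (i < K)%N) lam i ^+ 2 = \sum_(i < N | (K <= i)%N) lam i ^+ 2.
  by apply: eq_bigl => i; rewrite -leqNgt.
suff -> : \sum_(k < K) lam_ext lam k ^+ 2 = \sum_(i < N | (i < K)%N) lam i ^+ 2.
  by rewrite addrC addrK.
set g := fun k => lam_ext lam k ^+ 2.
have -> : \sum_(i < N | (i < K)%N) lam i ^+ 2 = \sum_(i < N | (i < K)%N) g i.
  by apply: eq_bigr => i _; rewrite /g lam_extE.
rewrite -(big_mkord xpredT g) -(big_mkord (fun i => (i < K)%N) g).
rewrite (@big_nat_widen _ _ _ 0 K (K + N)) ?leq_addr //.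
rewrite (@big_nat_widen _ _ _ 0 N (K + N)) ?leq_addl //.
rewrite (bigID (fun i => (i < N)%N)) /= [X in _ + X]big1 ?addr0.
  by apply: eq_bigl => i; rewrite andbC.
by move=> i /andP[_ Hi]; rewrite /g lam_ext0 ?expr0n // leqNgt.
Qed.

Theorem mainTheorem4 (R : realType) (M K N w1 w2 : nat) (f1 : R -> R)
  (t : 'I_N -> R) (lam : 'I_N -> R) (V : 'M[R]_(M.+1, K)) :
  (K <= M.+1)%N -> (0 < w1)%N -> (0 < w2)%N ->
  2 * (pi : R) / w2%:R <= 2 * (pi : R) / w1%:R ->
  continuous f1 ->
  (forall x : R, f1 (x + 2 * (pi : R) / w1%:R) = f1 x) ->
  let tau := 2 * (pi : R) / (w2%:R * (M.+1)%:R) in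
  let X := \matrix_(i < N, j < M.+1) f1 (t i + (j : nat)%:R * tau) in
  injective t ->
  (forall i, 0 <= t i <= 2 * (pi : R) / w1%:R) ->
  (forall i j, row i X = row j X -> i = j) ->
  (forall i j : 'I_N, (i <= j)%N -> lam j <= lam i) ->
  (forall i, 0 <= lam i) ->
  char_poly (X *m X^T) = \prod_(i < N) ('X - (lam i)%:P) ->
  V^T *m V = 1%:M ->
  (X^T *m X) *m V = V *m diag_mx (\row_(k < K) lam_ext lam k) ->
  `| score X - score (X *m V) |
    <= Num.sqrt (8 / 3) * Num.sqrt (Num.sqrt (\sum_(i < N | (K <= i)%N) lam i ^+ 2)).
Proof.
move=> _ _ _ _ _ _ tau X _ _ _ _ _ Hcp HV HAV.
have Hd := dist_bound HV HAV.
have Htr := trace_sq Hcp.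
have -> : \sum_(i < N | (K <= i)%N) lam i ^+ 2 =
   \tr (X *m X^T *m (X *m X^T)) - \sum_k (\row_(k < K) lam_ext lam k) 0 k ^+ 2.
  rewrite Htr -sum_split; congr (_ - _); apply: eq_bigr => k _; by rewrite mxE.
set S := \tr _ - _ in Hd *.
set e := Num.sqrt (2 * Num.sqrt S) in Hd *.
have He : 0 <= e by apply: sqrtr_ge0.
have Hmp := mp_diff (fun i j => sqrtr_ge0 _) (fun i j => sqrtr_ge0 _) He Hd.
rewrite /score -mulrBl normrM.
have Hi3 : 0 <= (Num.sqrt (3 : R))^-1 by rewrite invr_ge0 sqrtr_ge0.
rewrite (ger0_norm Hi3).
have Hs3 : 0 < Num.sqrt (3 : R) by rewrite sqrtr_gt0.
apply: (@le_trans _ _ (2 * e / Num.sqrt 3)).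
  by apply: ler_wpM2r.
have HsS : 0 <= Num.sqrt S by apply: sqrtr_ge0.
rewrite -sqrtrM; last lra.
have H0 : 0 <= 2 * e / Num.sqrt 3 by apply: divr_ge0; [lra | apply: ltW].
rewrite -(ger0_norm H0) -sqrtr_sqr ler_sqrt; last lra.
rewrite /e expr_div_n exprMn sqr_sqrtr; last lra.
rewrite sqr_sqrtr; last lra.
rewrite ler_pdivrMr; last lra.
lra.
Qed.
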